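(* Let $c\in(0,1)$. There is a constant $C=C(c)>0$ such that the following holds. For $0<\beta_1<\beta_2$ let $g_{\mathrm{Foot},\beta_1,\beta_2}$ be the football soliton of the context, regarded via the map $\Psi_{\beta_1,\beta_2}$ of the context as a symmetric 2-tensor on an open subset of $\mathbb{R}^2\setminus\{0\}\cong\mathbb{C}^*$, and let $p_{\beta_1,\beta_2}\in S^2$ be the unique point with moment coordinate $\tau=\beta_1$ and angle $\theta=0$. Let $g_{\mathrm{Cyl}}=\frac{dx\otimes dx+dy\otimes dy}{x^2+y^2}$ on $\mathbb{R}^2\setminus\{0\}$. Then, as $\beta_1/\beta_2\to c$ and $\beta_2\to0$, the tensors $\frac{1}{\beta_1^2}g_{\mathrm{Foot},\beta_1,\beta_2}$ converge to $C\,g_{\mathrm{Cyl}}$ in $C^k$ on compact subsets of $\mathbb{R}^2\setminus\{0\}$ for every $k\ge0$, with $\Psi_{\beta_1,\beta_2}(p_{\beta_1,\beta_2})=e^0=1$; in particular $\big(\frac{1}{\beta_1^2}g_{\mathrm{Foot},\beta_1,\beta_2},p_{\beta_1,\beta_2}\big)\to(C g_{\mathrm{Cyl}},1)$ in the pointed sense.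
   Context: Regard $S^2=\mathbb{C}\cup\{\infty\}$ as the Riemann sphere with $N=\{z=0\}$ and $S=\{z=\infty\}$, and write $z=|z|e^{i\theta}$. For $0<\beta_1<\beta_2$, the football soliton $g_{\mathrm{Foot},\beta_1,\beta_2}$ is the unique Riemannian metric on $S^2\setminus\{N,S\}$, compatible with the complex structure, with a conical singularity of angle $2\pi\beta_1$ at $N$ and of angle $2\pi\beta_2$ at $S$, of total area $2\pi(\beta_1+\beta_2)$, which is a gradient Ricci soliton in the sense that its Kähler form $\omega$ satisfies $\mathrm{Ric}\,\omega=\omega-\mathcal{L}_X\omega+2\pi(1-\beta_1)\delta_N+2\pi(1-\beta_2)\delta_S$ for a gradient vector field $X$. The metric is rotationally symmetric, so on $\mathbb{C}^*$ one has $\omega=\sqrt{-1}\partial\bar\partial f(s)$ with $s=\log|z|^2$ and $f$ strictly convex; the moment coordinate is $\tau=f'(s)$, normalized (by adding a linear function of $s$ to $f$) so that $\tau\to0$ at $N$; then $\tau$ takes values in $(0,\beta_1+\beta_2)$. Let $a=a(\beta_1,\beta_2)$ be the unique number in $(0,1/\beta_1)$ with $a\beta_1-1+(a\beta_2+1)e^{-a(\beta_1+\beta_2)}=0$. Let $b=b(c)$ be the unique positive solution $x\in(0,1/c)$ of $cx-1+(x+1)e^{-x(1+c)}=0$, and $B=B(c)=1-(1+b)e^{-b}>0$. The map $\Psi_{\beta_1,\beta_2}:S^2\setminus\{N,S\}\to\mathbb{C}^*\cong\mathbb{R}^2\setminus\{0\}$ sends the point with moment coordinate $\tau$ and angle $\theta$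 to $\exp\big(a^2(\beta_1-\tau)/(2B)+i\theta\big)$; tensors are transported via this map. *)

(* Defs.v *)
From Stdlib Require Import Reals Lra List.
From Coquelicot Require Import Coquelicot.
Open Scope R_scope.

(* Points of R^2 = C, z = x + i y  ~  (x, y). *)
Definition pt : Type := (R * R)%type.
Definition nrm2 (p : pt) : R := fst p ^ 2 + snd p ^ 2.
Definition dot (v w : pt) : R := fst v * fst w + snd v * snd w.

(* A (symmetric 2-)tensor field on (an open subset of) R^2:
   T p v w = value of the tensor at the point p on the vectors v, w. *)
Definition tensor2 : Type := pt -> pt -> pt -> R.

(* The football soliton, in the rotationally symmetric description of
   the context: omega = sqrt(-1) dd^bar f(s), s = log|z|^2, on C^*.     *)

Definition tau (f : R -> R) (z : pt) : R := Derive_n f 1 (ln (nrm2 z)).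

(* The Riemannian metric g with Kaehler form omega = i dd^bar f(s), i.e.
   omega = g(J.,.):  g = 2 f''(s) (dx^2 + dy^2) / |z|^2. *)
Definition g_foot (f : R -> R) : tensor2 :=
  fun z v w => 2 * Derive_n f 2 (ln (nrm2 z)) / nrm2 z * dot v w.

(* f is a potential of the football soliton with cone angles 2 pi b1 at
   N = {z = 0} and 2 pi b2 at S = {z = oo}:
   - f smooth and strictly convex;
   - moment coordinate normalised: tau -> 0 at N, and tau -> b1 + b2 at S
     (total area 2 pi (b1 + b2));
   - gradient Ricci soliton equation Ric omega = omega - L_X omega on C^*,
     X = lam * (radial holomorphic gradient field), which for
     omega = i dd^bar f(s) reads  -log f'' = f - lam f' + (pluriharmonic
     radial function al s + be);
   - conical singularities of angles 2 pi b1 at N and 2 pi b2 at S: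
     d f''/d tau = f'''/f'' tends to b1 at N and to -b2 at S.            *)
Definition is_football_potential (b1 b2 : R) (f : R -> R) : Prop :=
  (forall (n : nat) (s : R), ex_derive_n f n s) /\
  (forall s : R, 0 < Derive_n f 2 s) /\
  is_lim (Derive_n f 1) m_infty (Finite 0) /\
  is_lim (Derive_n f 1) p_infty (Finite (b1 + b2)) /\
  (exists lam al be : R, forall s : R,
      - ln (Derive_n f 2 s) = f s - lam * Derive_n f 1 s + al * s + be) /\
  is_lim (fun s => Derive_n f 3 s / Derive_n f 2 s) m_infty (Finite b1) /\
  is_lim (fun s => Derive_n f 3 s / Derive_n f 2 s) p_infty (Finite (- b2)).

Definition is_a (b1 b2 a : R) : Prop :=
  0 < a < / b1 /\ a * b1 - 1 + (a * b2 + 1) * exp (- (a * (b1 + b2))) = 0.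

Definition is_b (c x : R) : Prop :=
  0 < x < / c /\ c * x - 1 + (x + 1) * exp (- (x * (1 + c))) = 0.

Definition Bc (b : R) : R := 1 - (1 + b) * exp (- b).

(* The map Psi: the point with moment coordinate tau and angle theta
   (theta = arg z) goes to exp(a^2 (b1 - tau)/(2B) + i theta). *)
Definition Psi (a B b1 : R) (f : R -> R) (z : pt) : pt :=
  let h := a ^ 2 * (b1 - tau f z) / (2 * B) in
  let r := sqrt (nrm2 z) in
  (exp h * (fst z / r), exp h * (snd z / r)).

(* partial derivative: true = d/dx, false = d/dy *)
Definition pd (d : bool) (F : pt -> R) : pt -> R :=
  fun p => if d then Derive (fun t => F (t, snd p)) (fst p)
           else Derive (fun t => F (fst p, t)) (snd p).

Definition pds (l : list bool) (F : pt -> R) : pt -> R :=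
  fold_right pd F l.

Definition jac (Phi : pt -> pt) (z v : pt) : pt :=
  (fst v * pd true (fun p => fst (Phi p)) z + snd v * pd false (fun p => fst (Phi p)) z,
   fst v * pd true (fun p => snd (Phi p)) z + snd v * pd false (fun p => snd (Phi p)) z).

Definition is_pushforward (Phi : pt -> pt) (g T : tensor2) : Prop :=
  forall z : pt, z <> (0, 0) ->
    forall v w : pt, T (Phi z) (jac Phi z v) (jac Phi z w) = g z v w.

Definition ebas (i : bool) : pt := if i then (1, 0) else (0, 1).
Definition comp (T : tensor2) (i j : bool) : pt -> R :=
  fun x => T x (ebas i) (ebas j).

Definition g_cyl : tensor2 := fun z v w => dot v w / nrm2 z.

(* C^k convergence on compact subsets of R^2 \ {0}, for every k: every
   partial derivative of every component converges uniformly on every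
   closed annulus r1 <= |x| <= r2 (every compact subset of R^2 \ {0} lies
   in such an annulus, and these annuli are compact). *)
Definition Cinf_loc_conv (Tn : nat -> tensor2) (T : tensor2) : Prop :=
  forall r1 r2 : R, 0 < r1 -> r1 < r2 ->
  forall (l : list bool) (i j : bool) (eps : R), 0 < eps ->
  exists N : nat, forall n : nat, (N <= n)%nat ->
    forall x : pt, r1 <= sqrt (nrm2 x) <= r2 ->
      Rabs (pds l (comp (Tn n) i j) x - pds l (comp T i j) x) < eps.

(* Main.v *)
Require Import Defs.
From Stdlib Require Import Reals Lra Lia List.
From Coquelicot Require Import Coquelicot.
Open Scope R_scope.


Lemma der_cont (g : R -> R) x l : is_derive g x l -> continuity_pt g x.
Proof.
  intro H. apply continuity_pt_filterlim. apply (ex_derive_continuous (V:=R_NormedModule)). now exists l.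
Qed.

Lemma mvt2 g dg u v : u < v ->
  (forall x, u <= x <= v -> is_derive g x (dg x)) ->
  exists c, g v - g u = dg c * (v - u) /\ u < c < v.
Proof.
  intros Huv Hd. apply MVT_cor2; auto. intros c Hc. apply is_derive_Reals. auto.
Qed.

Lemma incr_strict g dg u v : u < v ->
  (forall x, u <= x <= v -> is_derive g x (dg x)) ->
  (forall x, u < x < v -> 0 < dg x) -> g u < g v.
Proof.
  intros Huv Hd Hp. destruct (mvt2 g dg u v Huv Hd) as [c [He Hc]].
  specialize (Hp c Hc). nra.
Qed.

Lemma incr_weak g dg u v : u <= v ->
  (forall x, u <= x <= v -> is_derive g x (dg x)) ->
  (forall x, u < x < v -> 0 <= dg x) -> g u <= g v.
Proof.
  intros Huv Hd Hp. destruct (Req_dec u v) as [->|Hne]. lra.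
  destruct (mvt2 g dg u v ltac:(lra) Hd) as [c [He Hc]].
  specialize (Hp c Hc). nra.
Qed.

Lemma exp_le_exp' x y : x <= y -> exp x <= exp y.
Proof. intro h. destruct h as [h|h]. left; now apply exp_increasing. right; now subst. Qed.


Definition Fr c x := c * x - 1 + (x + 1) * exp (- (x * (1 + c))).
Definition dF c x := c - (c + x * (1 + c)) * exp (- (x * (1 + c))).
Definition ddF c x := (1 + c) * (x * (1 + c) - (1 - c)) * exp (- (x * (1 + c))).

Lemma Fr_der c x : is_derive (Fr c) x (dF c x).
Proof. unfold Fr, dF. auto_derive; auto. ring. Qed.
Lemma dF_der c x : is_derive (dF c) x (ddF c x).
Proof. unfold dF, ddF. auto_derive; auto. ring. Qed.

Lemma Fr0 c : Fr c 0 = 0.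
Proof. unfold Fr. replace (- (0 * (1 + c))) with 0 by ring. rewrite exp_0. ring. Qed.
Lemma dF0 c : dF c 0 = 0.
Proof. unfold dF. replace (- (0 * (1 + c))) with 0 by ring. rewrite exp_0. ring. Qed.

Section Fc.
Variable c : R.
Hypothesis Hc : 0 < c < 1.
Let x0 := (1 - c) / (1 + c).
Lemma x0_pos : 0 < x0.
Proof. unfold x0. apply Rdiv_lt_0_compat; lra. Qed.

Lemma ddF_neg x : x < x0 -> ddF c x < 0.
Proof.
  intro H. unfold ddF. unfold x0 in H.
  assert (x * (1 + c) < 1 - c).
  { apply (Rmult_lt_compat_r (1+c)) in H; [|lra]. field_simplify in H; lra. }
  assert (0 < exp (- (x * (1 + c)))) by apply exp_pos.
  assert (0 < 1 + c) by lra.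
  assert ((1 + c) * (x * (1 + c) - (1 - c)) < 0) by nra. nra.
Qed.

Lemma ddF_pos x : x0 < x -> 0 < ddF c x.
Proof.
  intro H. unfold ddF. unfold x0 in H.
  assert (1 - c < x * (1 + c)).
  { apply (Rmult_lt_compat_r (1+c)) in H; [|lra]. field_simplify in H; lra. }
  assert (0 < exp (- (x * (1 + c)))) by apply exp_pos.
  assert (0 < (1 + c) * (x * (1 + c) - (1 - c))) by nra. nra.
Qed.

Lemma dF_pos_neg x : x < 0 -> 0 < dF c x.
Proof.
  intro H. rewrite <- (dF0 c).
  assert (- dF c x < - dF c 0); [|lra].
  apply (incr_strict (fun t => - dF c t) (fun t => - ddF c t)); auto.
  - intros t _. apply (is_derive_opp (dF c)). apply dF_der.
  - intros t Ht. pose proof (ddF_neg t). pose proof x0_pos. lra.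
Qed.

Lemma dF_neg_small x : 0 < x <= x0 -> dF c x < 0.
Proof.
  intro H. rewrite <- (dF0 c).
  assert (- dF c 0 < - dF c x); [|lra].
  apply (incr_strict (fun t => - dF c t) (fun t => - ddF c t)); try lra.
  - intros t _. apply (is_derive_opp (dF c)). apply dF_der.
  - intros t Ht. pose proof (ddF_neg t). lra.
Qed.

Lemma Fr_neg x : x < 0 -> Fr c x < 0.
Proof.
  intro H. rewrite <- (Fr0 c).
  apply (incr_strict (Fr c) (dF c)); auto.
  - intros t _. apply Fr_der.
  - intros t Ht. apply dF_pos_neg. lra.
Qed.

Lemma Fr_small x : 0 < x <= x0 -> Fr c x < 0.
Proof.
  intro H. rewrite <- (Fr0 c).
  assert (- Fr c 0 < - Fr c x); [|lra].
  apply (incr_strict (fun t => - Fr c t) (fun t => - dF c t)); try lra.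
  - intros t _. apply (is_derive_opp (Fr c)). apply Fr_der.
  - intros t Ht. pose proof (dF_neg_small t). lra.
Qed.

Lemma dF_incr u v : x0 <= u < v -> dF c u < dF c v.
Proof.
  intro H. apply (incr_strict (dF c) (ddF c)); try lra.
  - intros t _. apply dF_der.
  - intros t Ht. apply ddF_pos. lra.
Qed.

Lemma root_props y : Fr c y = 0 -> y <> 0 -> x0 < y /\ 0 < dF c y.
Proof.
  intros Hy Hn. pose proof x0_pos.
  assert (x0 < y).
  { destruct (Rlt_or_le x0 y) as [h|h]; auto.
    destruct (Rlt_or_le y 0) as [h'|h'].
    - pose proof (Fr_neg y h'). lra.
    - assert (0 < y) by lra. pose proof (Fr_small y ltac:(lra)). lra. }
  split; auto.
  destruct (Rlt_or_le 0 (dF c y)) as [h|h]; auto.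
  exfalso.
  assert (Fr c y < Fr c x0).
  { assert (- Fr c x0 < - Fr c y); [|lra].
    apply (incr_strict (fun t => - Fr c t) (fun t => - dF c t)); try lra.
    - intros t _. apply (is_derive_opp (Fr c)). apply Fr_der.
    - intros t Ht. pose proof (dF_incr t y ltac:(lra)). lra. }
  pose proof (Fr_small x0 ltac:(lra)). lra.
Qed.

Lemma Fr_pos_after y t : Fr c y = 0 -> y <> 0 -> y < t -> 0 < Fr c t.
Proof.
  intros Hy Hn Ht. destruct (root_props y Hy Hn) as [H1 H2].
  rewrite <- Hy. apply (incr_strict (Fr c) (dF c)); auto.
  - intros s _. apply Fr_der.
  - intros s Hs. pose proof (dF_incr y s ltac:(lra)). lra.
Qed.

Lemma root_unique y1 y2 : Fr c y1 = 0 -> y1 <> 0 -> Fr c y2 = 0 -> y2 <> 0 -> y1 = y2.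
Proof.
  intros H1 N1 H2 N2. destruct (Rtotal_order y1 y2) as [h|[h|h]]; auto.
  - pose proof (Fr_pos_after y1 y2 H1 N1 h). lra.
  - pose proof (Fr_pos_after y2 y1 H2 N2 h). lra.
Qed.

Lemma Fr_cont : continuity (Fr c).
Proof. intro x. eapply der_cont. apply Fr_der. Qed.

Lemma Fr_neg_before y t : Fr c y = 0 -> y <> 0 -> 0 < t < y -> Fr c t < 0.
Proof.
  intros Hy Hn Ht. pose proof x0_pos.
  destruct (Rle_or_lt t x0) as [h|h]. apply Fr_small; lra.
  destruct (Rlt_or_le (Fr c t) 0) as [h'|h']; auto. exfalso.
  pose proof (Fr_small x0 ltac:(lra)) as Hx0.
  destruct (IVT_gen (Fr c) x0 t 0 Fr_cont) as [z [Hz Hz']].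
  { rewrite Rmin_left by lra. rewrite Rmax_right by lra. lra. }
  rewrite Rmin_left in Hz by lra. rewrite Rmax_right in Hz by lra.
  assert (z = y) by (apply root_unique; auto; lra). lra.
Qed.
End Fc.


Lemma Fr_cont_c x c : continuity_pt (fun c' => Fr c' x) c.
Proof. eapply der_cont with (l := x - (x + 1) * x * exp (- (x * (1 + c)))). unfold Fr. auto_derive; auto. ring. Qed.

Lemma lim_ev_lt (u : nat -> R) (l : R) : is_lim_seq u l -> l < 0 -> eventually (fun n => u n < 0).
Proof.
  intros H Hl. apply is_lim_seq_spec in H. hnf in H.
  destruct (H (mkposreal (-l) ltac:(lra))) as [N HN]. exists N. intros n Hn.
  specialize (HN n Hn). simpl in HN. apply Rabs_def2 in HN. lra.
Qed.
Lemma lim_ev_gt (u : nat -> R) (l : R) : is_lim_seq u l -> 0 < l -> eventually (fun n => 0 < u n).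
Proof.
  intros H Hl. apply is_lim_seq_spec in H. hnf in H.
  destruct (H (mkposreal l Hl)) as [N HN]. exists N. intros n Hn.
  specialize (HN n Hn). simpl in HN. apply Rabs_def2 in HN. lra.
Qed.

Lemma root_conv c b (cn xn : nat -> R) : 0 < c < 1 -> (forall n, 0 < cn n < 1) ->
  is_lim_seq cn c -> Fr c b = 0 -> 0 < b ->
  (forall n, Fr (cn n) (xn n) = 0 /\ 0 < xn n) -> is_lim_seq xn b.
Proof.
  intros Hc Hcn Hlim Hb Hb0 Hx. apply is_lim_seq_spec. intro eps.
  set (d := Rmin (eps/2) (b/2)).
  assert (Hd : 0 < d /\ d < eps /\ d < b).
  { unfold d. pose proof (cond_pos eps). split. apply Rmin_glb_lt; lra.
    split. eapply Rle_lt_trans. apply Rmin_l. lra. eapply Rle_lt_trans. apply Rmin_r. lra. }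
  assert (H1 : Fr c (b - d) < 0) by (apply (Fr_neg_before c Hc b); auto; lra).
  assert (H2 : 0 < Fr c (b + d)) by (apply (Fr_pos_after c Hc b); auto; lra).
  assert (E1 := lim_ev_lt _ _ (is_lim_seq_continuous (fun c' => Fr c' (b - d)) cn c (Fr_cont_c _ c) Hlim) H1).
  assert (E2 := lim_ev_gt _ _ (is_lim_seq_continuous (fun c' => Fr c' (b + d)) cn c (Fr_cont_c _ c) Hlim) H2).
  destruct E1 as [N1 E1]. destruct E2 as [N2 E2]. exists (max N1 N2). intros n Hn.
  specialize (E1 n ltac:(lia)). specialize (E2 n ltac:(lia)). simpl in E1, E2.
  destruct (IVT_gen (Fr (cn n)) (b - d) (b + d) 0 (Fr_cont (cn n))) as [z [Hz Hz']].
  { rewrite Rmin_left by lra. rewrite Rmax_right by lra. lra. }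
  rewrite Rmin_left in Hz by lra. rewrite Rmax_right in Hz by lra.
  destruct (Hx n) as [Hx1 Hx2].
  assert (z = xn n) by (apply (root_unique (cn n) (Hcn n)); auto; lra).
  subst z. apply Rabs_def1; lra.
Qed.


Lemma is_lim_mult' (f g : R -> R) x (lf lg : R) : is_lim f x lf -> is_lim g x lg -> is_lim (fun y => f y * g y) x (lf * lg).
Proof. intros A B. apply (is_lim_mult f g x lf lg A B). exact I. Qed.

Lemma lim_eq (f : R -> R) x (l1 l2 : R) : is_lim f x l1 -> is_lim f x l2 -> l1 = l2.
Proof. intros A B. apply is_lim_unique in A. apply is_lim_unique in B. rewrite A in B. now injection B. Qed.

Lemma der_ln_comp g x dg : is_derive g x dg -> 0 < g x -> is_derive (fun t => ln (g t)) x (dg / g x).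
Proof.
  intros H Hp. assert (E : ex_derive g x) by (now exists dg).
  evar (l : R). assert (is_derive (fun t => ln (g t)) x l).
  { auto_derive; [repeat split; auto|]. subst l. reflexivity. }
  assert (HD: Derive (fun y => g y) x = dg) by exact (is_derive_unique (fun y => g y) x dg H).
  replace (dg / g x) with l; auto. subst l. rewrite HD. field. lra.
Qed.

Lemma der_exp_comp g x dg : is_derive g x dg -> is_derive (fun t => exp (g t)) x (dg * exp (g x)).
Proof.
  intros H. assert (E : ex_derive g x) by (now exists dg).
  evar (l : R). assert (is_derive (fun t => exp (g t)) x l).
  { auto_derive; [repeat split; auto|]. subst l. reflexivity. }
  assert (HD: Derive (fun y => g y) x = dg) by exact (is_derive_unique (fun y => g y) x dg H).
  replace (dg * exp (g x)) with l; auto. subst l. rewrite HD. ring.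
Qed.

Lemma der_unique (g : R -> R) x l1 l2 : is_derive g x l1 -> is_derive g x l2 -> l1 = l2.
Proof. intros A B. apply is_derive_unique in A. apply is_derive_unique in B. congruence. Qed.

Lemma lim_minf_spec (g : R -> R) (l : R) : is_lim g m_infty l ->
  forall eps, 0 < eps -> exists M, forall s, s < M -> Rabs (g s - l) < eps.
Proof.
  intros H eps He. apply is_lim_spec in H. destruct (H (mkposreal eps He)) as [M HM].
  exists M. exact HM.
Qed.
Lemma lim_pinf_spec (g : R -> R) (l : R) : is_lim g p_infty l ->
  forall eps, 0 < eps -> exists M, forall s, M < s -> Rabs (g s - l) < eps.
Proof.
  intros H eps He. apply is_lim_spec in H. destruct (H (mkposreal eps He)) as [M HM].
  exists M. exact HM.
Qed.
Lemma lim_minf_intro (g : R -> R) (l : R) :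
  (forall eps, 0 < eps -> exists M, forall s, s < M -> Rabs (g s - l) < eps) -> is_lim g m_infty l.
Proof.
  intros H. apply is_lim_spec. intros eps. destruct (H eps (cond_pos eps)) as [M HM]. exists M. exact HM.
Qed.

Lemma Dfun (g : R -> R) x l : is_derive g x l -> Derive (fun y : R => g y) x = l.
Proof. intro H. exact (is_derive_unique g x l H). Qed.

Definition Pa (a b1 t : R) := (t - b1) / a + 1 / a ^ 2 + (b1 / a - 1 / a ^ 2) * exp (a * t).

Lemma Pa_der a b1 t : a <> 0 -> is_derive (Pa a b1) t (a * Pa a b1 t - t + b1).
Proof. intro h. unfold Pa. auto_derive; auto. field. auto. Qed.

Lemma Pa0 a b1 : a <> 0 -> Pa a b1 0 = 0.
Proof. intro h. unfold Pa. rewrite Rmult_0_r, exp_0. field. auto. Qed.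

Lemma lim_pos_ge (g : R -> R) (l : R) : is_lim g p_infty l -> (forall s, 0 < g s) -> 0 <= l.
Proof.
  intros H Hp. destruct (Rle_or_lt 0 l) as [h|h]; auto.
  destruct (lim_pinf_spec g l H (- l) ltac:(lra)) as [M HM].
  specialize (HM (M + 1) ltac:(lra)). specialize (Hp (M+1)). apply Rabs_def2 in HM. lra.
Qed.

Lemma cont_of_der (g : R -> R) x l : is_derive g x l -> continuous g x.
Proof. intro H. apply (ex_derive_continuous (V:=R_NormedModule)). now exists l. Qed.

Lemma cont_of_ex (g : R -> R) x : ex_derive g x -> continuous g x.
Proof. intro H. apply (ex_derive_continuous (V:=R_NormedModule)). exact H. Qed.

Lemma ratio_in b1 b2 : 0 < b1 < b2 -> 0 < b1 / b2 < 1.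
Proof. intro h. split. apply Rdiv_lt_0_compat; lra. apply (Rmult_lt_reg_r b2); [lra|]. field_simplify; lra. Qed.

Lemma Fr_is_a b1 b2 a : 0 < b1 < b2 -> a * b1 - 1 + (a * b2 + 1) * exp (- (a * (b1 + b2))) = Fr (b1 / b2) (a * b2).
Proof.
  intro h. unfold Fr. replace (b1 / b2 * (a * b2)) with (a * b1) by (field; lra).
  replace (- (a * b2 * (1 + b1 / b2))) with (- (a * (b1 + b2))) by (field; lra). ring.
Qed.

Lemma Fr_Pa b1 b2 lam : 0 < b1 < b2 -> lam <> 0 ->
  Fr (b1 / b2) (lam * b2) = lam ^ 2 * exp (- (lam * (b1 + b2))) * Pa lam b1 (b1 + b2).
Proof.
  intros h hl. rewrite <- Fr_is_a by auto. unfold Pa.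
  assert (XY : exp (lam * (b1 + b2)) = / exp (- (lam * (b1 + b2)))).
  { rewrite exp_Ropp, Rinv_inv. reflexivity. }
  rewrite XY. pose proof (exp_pos (- (lam * (b1 + b2)))). field. split; lra.
Qed.


Section Foot.
Variables (b1 b2 : R) (f : R -> R).
Hypothesis Hb : 0 < b1 < b2.
Hypothesis Hf : is_football_potential b1 b2 f.

Let f1 := Derive_n f 1.
Let f2 := Derive_n f 2.
Let f3 := Derive_n f 3.

Lemma fd1 s : is_derive f s (f1 s).
Proof. destruct Hf as [H _]. apply (Derive_correct (Derive_n f 0)). exact (H 1%nat s). Qed.
Lemma fd2 s : is_derive f1 s (f2 s).
Proof. destruct Hf as [H _]. apply (Derive_correct (Derive_n f 1)). exact (H 2%nat s). Qed.
Lemma fd3 s : is_derive f2 s (f3 s).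
Proof. destruct Hf as [H _]. apply (Derive_correct (Derive_n f 2)). exact (H 3%nat s). Qed.
Lemma f2pos s : 0 < f2 s.
Proof. destruct Hf as [_ [H _]]. apply H. Qed.

Lemma f1_incr u v : u < v -> f1 u < f1 v.
Proof. intro h. apply (incr_strict f1 f2); auto. intros; apply fd2. intros; apply f2pos. Qed.

Lemma f1_lim_m : is_lim f1 m_infty 0.
Proof. destruct Hf as [_ [_ [H _]]]. exact H. Qed.
Lemma f1_lim_p : is_lim f1 p_infty (b1 + b2).
Proof. destruct Hf as [_ [_ [_ [H _]]]]. exact H. Qed.
Lemma r_lim_m : is_lim (fun s => f3 s / f2 s) m_infty b1.
Proof. destruct Hf as [_ [_ [_ [_ [_ [H _]]]]]]. exact H. Qed.
Lemma r_lim_p : is_lim (fun s => f3 s / f2 s) p_infty (- b2).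
Proof. destruct Hf as [_ [_ [_ [_ [_ [_ H]]]]]]. exact H. Qed.

Lemma f1_bounds s : 0 < f1 s < b1 + b2.
Proof.
  split.
  - destruct (Rlt_or_le 0 (f1 s)) as [h|h]; auto. exfalso.
    destruct (lim_minf_spec f1 0 f1_lim_m (f1 s - f1 (s - 1))) as [M HM].
    { pose proof (f1_incr (s-1) s ltac:(lra)). lra. }
    set (t := Rmin M (s - 1) - 1).
    assert (t < M /\ t < s - 1) by (unfold t; split; [pose proof (Rmin_l M (s-1))|pose proof (Rmin_r M (s-1))]; lra).
    specialize (HM t ltac:(lra)). pose proof (f1_incr t (s-1) ltac:(lra)).
    pose proof (f1_incr (s-1) s ltac:(lra)). apply Rabs_def2 in HM. lra.
  - destruct (Rlt_or_le (f1 s) (b1 + b2)) as [h|h]; auto. exfalso.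
    destruct (lim_pinf_spec f1 _ f1_lim_p (f1 (s + 1) - f1 s)) as [M HM].
    { pose proof (f1_incr s (s+1) ltac:(lra)). lra. }
    set (t := Rmax M (s + 1) + 1).
    assert (M < t /\ s + 1 < t) by (unfold t; split; [pose proof (Rmax_l M (s+1))|pose proof (Rmax_r M (s+1))]; lra).
    specialize (HM t ltac:(lra)). pose proof (f1_incr (s+1) t ltac:(lra)).
    pose proof (f1_incr s (s+1) ltac:(lra)). apply Rabs_def2 in HM. lra.
Qed.

Lemma sol_ode : exists lam al, forall s, f3 s = f2 s * (lam * f2 s - f1 s - al).
Proof.
  destruct Hf as [_ [_ [_ [_ [[lam [al [be Hs]]] _]]]]].
  exists lam, al. intro s.
  assert (A : is_derive (fun t => - ln (f2 t)) s (- (f3 s / f2 s))).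
  { apply (is_derive_opp (fun t => ln (f2 t))). apply der_ln_comp. apply fd3. apply f2pos. }
  assert (B : is_derive (fun t => f t - lam * f1 t + al * t + be) s (f1 s - lam * f2 s + al)).
  { pose proof (fd1 s) as D1. pose proof (fd2 s) as D2.
    assert (E1 : ex_derive f s) by (eexists; eauto).
    assert (E2 : ex_derive f1 s) by (eexists; eauto).
    auto_derive. repeat split; auto.
    rewrite (Dfun f s _ D1), (Dfun f1 s _ D2). ring. }
  assert (C : is_derive (fun t => - ln (f2 t)) s (f1 s - lam * f2 s + al)).
  { apply (is_derive_ext (fun t => f t - lam * f1 t + al * t + be)); auto. }
  pose proof (der_unique _ _ _ _ A C) as HE. pose proof (f2pos s).
  assert (f3 s = - (f1 s - lam * f2 s + al) * f2 s) by (rewrite <- HE; field; lra).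
  rewrite H0. ring.
Qed.

Lemma f2_lim_m : is_lim f2 m_infty 0.
Proof.
  destruct (lim_minf_spec _ _ r_lim_m (b1/2) ltac:(lra)) as [M HM].
  assert (Hle : forall s, s < M -> f2 s <= f2 M * exp (- (b1 / 2) * (M - s))).
  { intros s Hs.
    assert (ln (f2 s) - b1 / 2 * s <= ln (f2 M) - b1 / 2 * M).
    { apply (incr_weak (fun t => ln (f2 t) - b1 / 2 * t) (fun t => f3 t / f2 t - b1 / 2)); try lra.
      - intros x _. apply (is_derive_minus (fun t => ln (f2 t)) (fun t => b1 / 2 * t)).
        apply der_ln_comp. apply fd3. apply f2pos.
        auto_derive; auto. ring.
      - intros x Hx. specialize (HM x ltac:(lra)). apply Rabs_def2 in HM. lra. }
    rewrite <- (exp_ln (f2 s)) by apply f2pos.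
    rewrite <- (exp_ln (f2 M)) by apply f2pos. rewrite <- exp_plus.
    apply exp_le_exp'. lra. }
  apply lim_minf_intro. intros eps He.
  set (K := Rmax 0 (ln (f2 M) - ln eps)).
  exists (M - 2 * K / b1 - 1). intros s Hs.
  assert (HK0 : 0 <= K) by apply Rmax_l.
  assert (HK1 : ln (f2 M) - ln eps <= K) by apply Rmax_r.
  assert (0 <= 2 * K / b1) by (apply Rmult_le_pos; [lra|]; left; apply Rinv_0_lt_compat; lra).
  assert (HsM : s < M) by lra.
  assert (b1 / 2 * (M - s) > K).
  { assert (M - s > 2 * K / b1 + 1) by lra.
    apply (Rmult_lt_compat_l (b1/2)) in H0; [|lra].
    replace (b1 / 2 * (2 * K / b1 + 1)) with (K + b1/2) in H0 by (field; lra). lra. }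
  specialize (Hle s HsM). pose proof (f2pos s). pose proof (f2pos M).
  rewrite Rminus_0_r, Rabs_pos_eq by lra.
  eapply Rle_lt_trans; [exact Hle|].
  rewrite <- (exp_ln (f2 M)) at 1 by auto. rewrite <- exp_plus.
  rewrite <- (exp_ln eps) by auto. apply exp_increasing. lra.
Qed.

Lemma al_val lam al : (forall s, f3 s = f2 s * (lam * f2 s - f1 s - al)) -> al = - b1.
Proof.
  intro Hode.
  assert (L : is_lim (fun s => lam * f2 s - f1 s - al) m_infty (lam * 0 - 0 - al)).
  { apply is_lim_minus'; [|apply is_lim_const]. apply is_lim_minus'; [|apply f1_lim_m].
    apply (is_lim_scal_l f2 lam m_infty 0 f2_lim_m). }
  assert (L2 : is_lim (fun s => lam * f2 s - f1 s - al) m_infty b1).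
  { apply (is_lim_ext (fun s => f3 s / f2 s)); [|apply r_lim_m].
    intro s. rewrite Hode. field. pose proof (f2pos s). lra. }
  pose proof (lim_eq _ _ _ _ L L2). lra.
Qed.

Lemma psi_zero lam (P : R -> R) :
  (forall s, f3 s = f2 s * (lam * f2 s - f1 s + b1)) ->
  (forall t, is_derive P t (lam * P t - t + b1)) -> P 0 = 0 ->
  forall s, f2 s = P (f1 s).
Proof.
  intros Hode HP HP0.
  set (W := fun t => (f2 t - P (f1 t)) * exp (- (lam * f1 t))).
  assert (DW : forall t, is_derive W t 0).
  { intro t. pose proof (fd2 t) as D2. pose proof (fd3 t) as D3. pose proof (HP (f1 t)) as DP.
    assert (E2 : ex_derive f1 t) by (eexists; eauto).
    assert (E3 : ex_derive f2 t) by (eexists; eauto).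
    assert (EP : ex_derive P (f1 t)) by (eexists; eauto).
    unfold W. auto_derive. repeat split; auto.
    rewrite (Dfun f1 t _ D2), (Dfun f2 t _ D3), (Dfun P (f1 t) _ DP), Hode. ring. }
  assert (Wc : forall s t, W s = W t).
  { intros s t. destruct (Rtotal_order s t) as [h|[h|h]].
    - destruct (mvt2 W (fun _ => 0) s t h) as [c [Hc _]]; auto. lra.
    - now subst.
    - destruct (mvt2 W (fun _ => 0) t s h) as [c [Hc _]]; auto. lra. }
  assert (LW : is_lim W m_infty ((0 - P 0) * exp (- (lam * 0)))).
  { unfold W. apply is_lim_mult'.
    - apply is_lim_minus'. apply f2_lim_m.
      apply (is_lim_comp_continuous f1 P m_infty 0 f1_lim_m). eapply cont_of_der. apply HP.
    - apply (is_lim_comp_continuous f1 (fun x => exp (- (lam * x))) m_infty 0 f1_lim_m).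
      eapply cont_of_der with (l := - lam * exp (- (lam * 0))). auto_derive; auto. ring. }
  rewrite HP0 in LW. replace ((0 - 0) * exp (- (lam * 0))) with 0 in LW by ring.
  intro s.
  assert (LW2 : is_lim W m_infty (W s)).
  { apply (is_lim_ext (fun _ => W s)); [intro; apply Wc | apply is_lim_const]. }
  pose proof (lim_eq _ _ _ _ LW2 LW) as HW. unfold W in HW.
  pose proof (exp_pos (- (lam * f1 s))).
  apply Rmult_integral in HW. destruct HW as [HW|HW]; lra.
Qed.

Lemma ode_explicit a : is_a b1 b2 a -> forall s, f2 s = Pa a b1 (f1 s).
Proof.
  intros Ha.
  destruct sol_ode as [lam [al Hode]]. pose proof (al_val lam al Hode) as Hal. subst al.
  assert (Hode' : forall s, f3 s = f2 s * (lam * f2 s - f1 s + b1)).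
  { intro s. rewrite Hode. ring. }
  destruct (Req_dec lam 0) as [Hl|Hl].
  - exfalso. subst lam.
    pose (P0 := fun t => b1 * t - t ^ 2 / 2).
    assert (HP : forall s, f2 s = P0 (f1 s)).
    { apply (psi_zero 0 P0 Hode').
      - intro t. unfold P0. auto_derive; auto. field.
      - unfold P0. field. }
    assert (L : is_lim (fun s => P0 (f1 s)) p_infty (P0 (b1 + b2))).
    { apply (is_lim_comp_continuous f1 P0 p_infty (b1 + b2) f1_lim_p).
      eapply cont_of_der with (l := b1 - (b1 + b2)). unfold P0. auto_derive; auto. field. }
    pose proof (lim_pos_ge _ _ L) as G.
    assert (0 <= P0 (b1 + b2)). { apply G. intro s. rewrite <- HP. apply f2pos. }
    unfold P0 in H. nra.
  - assert (HP : forall s, f2 s = Pa lam b1 (f1 s)).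
    { apply (psi_zero lam (Pa lam b1) Hode'). intro t. apply Pa_der; auto. apply Pa0; auto. }
    set (S := b1 + b2).
    assert (L1 : is_lim (fun s => f3 s / f2 s) p_infty (lam * Pa lam b1 S - S + b1)).
    { apply (is_lim_ext (fun s => lam * Pa lam b1 (f1 s) - f1 s + b1)).
      { intro s. rewrite Hode', <- HP. field. pose proof (f2pos s). lra. }
      apply (is_lim_comp_continuous f1 (fun x => lam * Pa lam b1 x - x + b1) p_infty S f1_lim_p).
      apply cont_of_ex. unfold Pa. auto_derive; auto. }
    pose proof (lim_eq _ _ _ _ L1 r_lim_p) as E1.
    assert (PS : Pa lam b1 S = 0).
    { assert (lam * Pa lam b1 S = 0) by (unfold S in *; lra).
      apply Rmult_integral in H. destruct H; auto. contradiction. }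
    destruct Ha as [Ha1 Ha2]. rewrite Fr_is_a in Ha2 by auto.
    assert (Fr (b1 / b2) (lam * b2) = 0) by (rewrite Fr_Pa by auto; fold S; rewrite PS; ring).
    assert (lam * b2 = a * b2).
    { apply (root_unique (b1 / b2) (ratio_in b1 b2 Hb)); auto.
      intro h. apply Rmult_integral in h. lra. intro h. apply Rmult_integral in h. lra. }
    assert (lam = a) by (apply (Rmult_eq_reg_r b2); auto; lra).
    subst lam. exact HP.
Qed.

Lemma f1_cont : continuity f1.
Proof. intro x. eapply der_cont. apply fd2. Qed.

Lemma f1_surj t : 0 < t < b1 + b2 -> exists s, f1 s = t.
Proof.
  intro Ht.
  destruct (lim_minf_spec f1 0 f1_lim_m t ltac:(lra)) as [M1 H1].
  destruct (lim_pinf_spec f1 _ f1_lim_p (b1 + b2 - t) ltac:(lra)) as [M2 H2].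
  set (u := Rmin (M1 - 1) M2). set (v := Rmax (M2 + 1) (M1)).
  assert (u < M1 /\ u <= M2) by (unfold u; split; [pose proof (Rmin_l (M1-1) M2)|apply Rmin_r]; lra).
  assert (M2 < v /\ M1 <= v) by (unfold v; split; [pose proof (Rmax_l (M2+1) M1)|apply Rmax_r]; lra).
  specialize (H1 u ltac:(lra)). specialize (H2 v ltac:(lra)).
  apply Rabs_def2 in H1. apply Rabs_def2 in H2.
  destruct (IVT_gen f1 u v t f1_cont) as [s [_ Hs]].
  { rewrite Rmin_left, Rmax_right by lra. lra. }
  now exists s.
Qed.

Lemma f1_inj u v : f1 u = f1 v -> u = v.
Proof.
  intro h. destruct (Rtotal_order u v) as [k|[k|k]]; auto.
  - pose proof (f1_incr u v k). lra.
  - pose proof (f1_incr v u k). lra.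
Qed.
End Foot.


Inductive ex : Type :=
| Cst (c : R) | Peps | PE | Pk | X | Y | Ir | Lg | Eu | Iq
| Add (e1 e2 : ex) | Mul (e1 e2 : ex).

Definition Qv (B eps E : R) (p : pt) := 1 - B * eps * ln (nrm2 p) - E * exp (- (B * eps * ln (nrm2 p))).

Fixpoint den (B eps E kk : R) (e : ex) (p : pt) : R :=
  match e with
  | Cst c => c | Peps => eps | PE => E | Pk => kk
  | X => fst p | Y => snd p
  | Ir => / nrm2 p | Lg => ln (nrm2 p)
  | Eu => exp (- (B * eps * ln (nrm2 p)))
  | Iq => / Qv B eps E p
  | Add a b => den B eps E kk a p + den B eps E kk b p
  | Mul a b => den B eps E kk a p * den B eps E kk b p
  end.

Section Der.
Variable B : R.
Variable d : bool.
Definition Xd := if d then X else Y.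
Definition dL := Mul (Cst 2) (Mul Xd Ir).
Definition dEu := Mul (Mul (Cst (- B)) (Mul Peps dL)) Eu.
Definition dQ := Add (Mul (Cst (- B)) (Mul Peps dL)) (Mul (Cst (-1)) (Mul PE dEu)).
Fixpoint D (e : ex) : ex :=
  match e with
  | Cst _ | Peps | PE | Pk => Cst 0
  | X => Cst (if d then 1 else 0)
  | Y => Cst (if d then 0 else 1)
  | Ir => Mul (Cst (-2)) (Mul Xd (Mul Ir Ir))
  | Lg => dL
  | Eu => dEu
  | Iq => Mul (Mul (Cst (-1)) (Mul Iq Iq)) dQ
  | Add a b => Add (D a) (D b)
  | Mul a b => Add (Mul (D a) b) (Mul a (D b))
  end.
End Der.

Definition upd (d : bool) (p : pt) (t : R) : pt := if d then (t, snd p) else (fst p, t).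

Lemma der_plus (g h : R -> R) x dg dh : is_derive g x dg -> is_derive h x dh -> is_derive (fun t => g t + h t) x (dg + dh).
Proof. intros A B. exact (is_derive_plus g h x dg dh A B). Qed.
Lemma der_mult (g h : R -> R) x dg dh : is_derive g x dg -> is_derive h x dh -> is_derive (fun t => g t * h t) x (dg * h x + g x * dh).
Proof. intros A B. exact (is_derive_mult g h x dg dh A B (fun _ _ => Rmult_comm _ _)). Qed.

Lemma der_const (c x : R) : is_derive (fun _ : R => c) x 0.
Proof. exact (is_derive_const c x). Qed.
Lemma der_id (x : R) : is_derive (fun t : R => t) x 1.
Proof. exact (is_derive_id x). Qed.

Lemma den_der B eps E kk (e : ex) (d : bool) (p1 p2 : R) :
  0 < nrm2 (p1, p2) -> Qv B eps E (p1, p2) <> 0 ->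
  is_derive (fun t => den B eps E kk e (upd d (p1, p2) t)) (if d then p1 else p2)
    (den B eps E kk (D B d e) (p1, p2)).
Proof.
  intros Hn HQ. unfold nrm2, Qv in *. simpl in Hn, HQ.
  induction e; simpl.
  - apply der_const.
  - apply der_const.
  - apply der_const.
  - apply der_const.
  - destruct d; simpl. apply der_id. apply der_const.
  - destruct d; simpl. apply der_const. apply der_id.
  - destruct d; simpl; unfold nrm2; simpl; auto_derive; try lra; field; lra.
  - destruct d; simpl; unfold nrm2; simpl; auto_derive; try lra; field; lra.
  - destruct d; simpl; unfold nrm2; simpl; auto_derive; try lra; field; lra.
  - destruct d; simpl; unfold Qv, nrm2 in *; simpl in *; auto_derive; repeat split; try lra; field; lra.
  - apply der_plus; auto.
  - destruct d; exact (der_mult _ _ _ _ _ IHe1 IHe2).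
Qed.

Definition line_open (U : pt -> Prop) := forall p1 p2, U (p1, p2) -> forall d : bool,
  locally (if d then p1 else p2) (fun t => U (upd d (p1, p2) t)).

Lemma pd_ext (U : pt -> Prop) (F G : pt -> R) d p : line_open U -> (forall q, U q -> F q = G q) -> U p ->
  pd d F p = pd d G p.
Proof.
  intros HU HFG Hp. destruct p as [p1 p2]. specialize (HU p1 p2 Hp d).
  destruct d; unfold pd; simpl; apply Derive_ext_loc; simpl in HU.
  all: eapply filter_imp; [|exact HU]; intros t Ht; simpl; auto.
Qed.

Lemma pds_ext (U : pt -> Prop) (F G : pt -> R) l : line_open U -> (forall q, U q -> F q = G q) ->
  forall q, U q -> pds l F q = pds l G q.
Proof.
  intros HU HFG. induction l as [|d l IH]; intros q Hq; simpl; auto.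
  apply (pd_ext U); auto.
Qed.

Definition Ds B (l : list bool) (e : ex) := fold_right (fun d e => D B d e) e l.

Lemma pd_den B eps E kk e d p : 0 < nrm2 p -> Qv B eps E p <> 0 ->
  pd d (den B eps E kk e) p = den B eps E kk (D B d e) p.
Proof.
  intros Hn HQ. destruct p as [p1 p2].
  pose proof (den_der B eps E kk e d p1 p2 Hn HQ) as H. apply is_derive_unique in H.
  destruct d; unfold pd; simpl; exact H.
Qed.

Lemma pds_den B eps E kk e (U : pt -> Prop) : line_open U ->
  (forall q, U q -> 0 < nrm2 q /\ Qv B eps E q <> 0) ->
  forall l q, U q -> pds l (den B eps E kk e) q = den B eps E kk (Ds B l e) q.
Proof.
  intros HU HQ l. induction l as [|d l IH]; intros q Hq; simpl; auto.
  rewrite (pd_ext U (pds l (den B eps E kk e)) (den B eps E kk (Ds B l e))); auto.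
  apply pd_den; apply HQ; auto.
Qed.

Lemma annulus_open r1 r2 : line_open (fun q => r1 < nrm2 q < r2).
Proof.
  intros p1 p2 Hp d.
  set (g := fun t => nrm2 (upd d (p1, p2) t)).
  assert (Hc : continuity_pt g (if d then p1 else p2)).
  { apply continuity_pt_filterlim. apply cont_of_ex. unfold g, nrm2. destruct d; simpl; auto_derive; auto. }
  rewrite continuity_pt_locally in Hc.
  set (e := Rmin (nrm2 (p1,p2) - r1) (r2 - nrm2 (p1,p2))).
  assert (He : 0 < e) by (unfold e; apply Rmin_glb_lt; lra).
  specialize (Hc (mkposreal e He)). eapply filter_imp; [|exact Hc].
  intros t Ht. simpl in Ht.
  assert (g (if d then p1 else p2) = nrm2 (p1, p2)) by (unfold g; destruct d; reflexivity).
  rewrite H in Ht. apply Rabs_def2 in Ht. fold (g t).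
  pose proof (Rmin_l (nrm2 (p1,p2) - r1) (r2 - nrm2 (p1,p2))).
  pose proof (Rmin_r (nrm2 (p1,p2) - r1) (r2 - nrm2 (p1,p2))). fold e in H0, H1. lra.
Qed.


Lemma ln_le' x y : 0 < x -> x <= y -> ln x <= ln y.
Proof. intros h1 h2. destruct h2 as [h|h]. left; apply ln_increasing; auto. right; now subst. Qed.

Lemma Rabs_def2b x a : Rabs x <= a -> - a <= x <= a.
Proof. unfold Rabs. destruct (Rcase_abs x); lra. Qed.

Lemma seq_spec (u : nat -> R) (l : R) : is_lim_seq u l -> forall eps, 0 < eps -> exists N, forall n, (N <= n)%nat -> Rabs (u n - l) < eps.
Proof.
  intros H eps He. apply is_lim_seq_spec in H. hnf in H. destruct (H (mkposreal eps He)) as [N HN].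
  exists N. exact HN.
Qed.

Lemma exp_near0 w : Rabs w <= 1 -> Rabs (exp w - 1) <= 3 * Rabs w.
Proof.
  intro Hw. destruct (Req_dec w 0) as [->|Hn].
  - rewrite exp_0. rewrite Rminus_diag, Rabs_R0. lra.
  - assert (Hd : forall x, is_derive exp x (exp x)) by (intro; auto_derive; auto; ring).
    assert (Hb : forall c, Rabs c <= 1 -> exp c <= 3).
    { intros c Hc. eapply Rle_trans; [|apply exp_le_3]. apply exp_le_exp'.
      apply Rabs_def2b in Hc. lra. }
    destruct (Rlt_or_le 0 w) as [h|h].
    + destruct (mvt2 exp exp 0 w h) as [c [He Hc]]; auto.
      rewrite exp_0 in He. rewrite He. rewrite Rabs_mult. rewrite Rminus_0_r.
      pose proof (exp_pos c). rewrite (Rabs_pos_eq (exp c)) by lra.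
      apply Rmult_le_compat_r. apply Rabs_pos. apply Hb. apply Rabs_le; apply Rabs_def2b in Hw; lra.
    + assert (w < 0) by lra.
      destruct (mvt2 exp exp w 0 H) as [c [He Hc]]; auto.
      rewrite exp_0 in He. replace (exp w - 1) with (- (1 - exp w)) by ring.
      rewrite Rabs_Ropp, He, Rabs_mult.
      pose proof (exp_pos c). rewrite (Rabs_pos_eq (exp c)) by lra.
      replace (0 - w) with (- w) by ring. rewrite Rabs_Ropp.
      apply Rmult_le_compat_r. apply Rabs_pos. apply Hb. apply Rabs_le; apply Rabs_def2b in Hw; lra.
Qed.

Section UC.
Variables (B r1 r2 E0 kk0 : R) (epsn En kkn : nat -> R).
Hypothesis Hr1 : 0 < r1.
Hypothesis Hr12 : r1 <= r2.
Hypothesis Heps : is_lim_seq epsn 0.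
Hypothesis HE : is_lim_seq En E0.
Hypothesis Hk : is_lim_seq kkn kk0.
Hypothesis HE0 : 0 < 1 - E0.

Definition Kann (p : pt) := r1 <= nrm2 p <= r2.
Definition dn n := den B (epsn n) (En n) (kkn n).
Definition dl := den B 0 E0 kk0.

Definition UC e := (exists M, 0 <= M /\ forall p, Kann p -> Rabs (dl e p) <= M) /\
  (forall eps, 0 < eps -> exists N, forall n, (N <= n)%nat -> forall p, Kann p -> Rabs (dn n e p - dl e p) < eps).

Lemma UC_fixed e : (exists M, 0 <= M /\ forall p, Kann p -> Rabs (dl e p) <= M) ->
  (forall n p, dn n e p = dl e p) -> UC e.
Proof.
  intros HM Hf. split; auto. intros eps He. exists 0%nat. intros n _ p _.
  rewrite Hf, Rminus_diag, Rabs_R0. auto.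
Qed.

Lemma UC_seq e (u : nat -> R) (l : R) : is_lim_seq u l -> (forall n p, dn n e p = u n) -> (forall p, dl e p = l) -> UC e.
Proof.
  intros Hl Hu Hd. split.
  - exists (Rabs l). split. apply Rabs_pos. intros p _. rewrite Hd. lra.
  - intros eps He. destruct (seq_spec u l Hl eps He) as [N HN]. exists N. intros n Hn p _.
    rewrite Hu, Hd. auto.
Qed.

Lemma UC_add a b : UC a -> UC b -> UC (Add a b).
Proof.
  intros [[Ma [Ma0 HMa]] Ca] [[Mb [Mb0 HMb]] Cb]. split.
  - exists (Ma + Mb). split. lra. intros p Hp. unfold dl in *. simpl.
    eapply Rle_trans. apply Rabs_triang. specialize (HMa p Hp). specialize (HMb p Hp). lra.
  - intros eps He. destruct (Ca (eps/2) ltac:(lra)) as [N1 H1]. destruct (Cb (eps/2) ltac:(lra)) as [N2 H2].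
    exists (max N1 N2). intros n Hn p Hp. specialize (H1 n ltac:(lia) p Hp). specialize (H2 n ltac:(lia) p Hp).
    unfold dn, dl in *. simpl.
    replace (den B (epsn n) (En n) (kkn n) a p + den B (epsn n) (En n) (kkn n) b p - (den B 0 E0 kk0 a p + den B 0 E0 kk0 b p))
      with ((den B (epsn n) (En n) (kkn n) a p - den B 0 E0 kk0 a p) + (den B (epsn n) (En n) (kkn n) b p - den B 0 E0 kk0 b p)) by ring.
    eapply Rle_lt_trans. apply Rabs_triang. lra.
Qed.

Lemma prod_bound (x y x0 y0 Ma Mb d : R) : Rabs x0 <= Ma -> Rabs y0 <= Mb -> Rabs (x - x0) < d -> Rabs (y - y0) < d ->
  0 <= d <= 1 -> Rabs (x * y - x0 * y0) <= d * (1 + Ma + Mb).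
Proof.
  intros h1 h2 h3 h4 h5.
  replace (x * y - x0 * y0) with ((x - x0) * (y - y0) + x0 * (y - y0) + y0 * (x - x0)) by ring.
  eapply Rle_trans. apply Rabs_triang. eapply Rle_trans. apply Rplus_le_compat_r. apply Rabs_triang.
  rewrite !Rabs_mult.
  assert (Rabs (x - x0) * Rabs (y - y0) <= d * 1).
  { apply Rmult_le_compat; try apply Rabs_pos; lra. }
  assert (Rabs x0 * Rabs (y - y0) <= Ma * d) by (apply Rmult_le_compat; try apply Rabs_pos; lra).
  assert (Rabs y0 * Rabs (x - x0) <= Mb * d) by (apply Rmult_le_compat; try apply Rabs_pos; lra).
  lra.
Qed.

Lemma UC_mul a b : UC a -> UC b -> UC (Mul a b).
Proof.
  intros [[Ma [Ma0 HMa]] Ca] [[Mb [Mb0 HMb]] Cb]. split.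
  - exists (Ma * Mb). split. nra. intros p Hp. unfold dl in *. simpl. rewrite Rabs_mult.
    apply Rmult_le_compat; try apply Rabs_pos; auto.
  - intros eps He. set (d := Rmin 1 (eps / (2 * (1 + Ma + Mb)))).
    assert (Hd : 0 < d /\ d <= 1 /\ d * (1 + Ma + Mb) < eps).
    { unfold d. split. apply Rmin_glb_lt. lra. apply Rdiv_lt_0_compat; lra.
      split. apply Rmin_l. eapply Rle_lt_trans. apply Rmult_le_compat_r. lra. apply Rmin_r.
      replace (eps / (2 * (1 + Ma + Mb)) * (1 + Ma + Mb)) with (eps / 2) by (field; lra). lra. }
    destruct (Ca d ltac:(lra)) as [N1 H1]. destruct (Cb d ltac:(lra)) as [N2 H2].
    exists (max N1 N2). intros n Hn p Hp. specialize (H1 n ltac:(lia) p Hp). specialize (H2 n ltac:(lia) p Hp).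
    eapply Rle_lt_trans; [|apply Hd]. unfold dn, dl in *. simpl.
    apply prod_bound; auto; lra.
Qed.

Lemma K_pos p : Kann p -> 0 < nrm2 p.
Proof. unfold Kann. lra. Qed.

Lemma L_bound p : Kann p -> Rabs (ln (nrm2 p)) <= Rabs (ln r1) + Rabs (ln r2).
Proof.
  intro Hp. unfold Kann in Hp.
  assert (ln r1 <= ln (nrm2 p)) by (apply ln_le'; lra).
  assert (ln (nrm2 p) <= ln r2) by (apply ln_le'; lra).
  pose proof (Rle_abs (ln r2)). pose proof (Rle_abs (- ln r1)). rewrite Rabs_Ropp in H2.
  pose proof (Rabs_pos (ln r1)). pose proof (Rabs_pos (ln r2)). apply Rabs_le. split; lra.
Qed.

Lemma UC_X : UC X.
Proof.
  apply UC_fixed; [|reflexivity]. exists (1 + r2). split. lra.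
  intros [x y] Hp. unfold Kann, nrm2 in Hp. simpl in *. pose proof (pow2_ge_0 (x - 1)). pose proof (pow2_ge_0 (x + 1)). pose proof (pow2_ge_0 (y - 1)). pose proof (pow2_ge_0 (y + 1)). pose proof (pow2_ge_0 x). pose proof (pow2_ge_0 y). apply Rabs_le. unfold dl; simpl. split; nra.
Qed.
Lemma UC_Y : UC Y.
Proof.
  apply UC_fixed; [|reflexivity]. exists (1 + r2). split. lra.
  intros [x y] Hp. unfold Kann, nrm2 in Hp. simpl in *. pose proof (pow2_ge_0 (x - 1)). pose proof (pow2_ge_0 (x + 1)). pose proof (pow2_ge_0 (y - 1)). pose proof (pow2_ge_0 (y + 1)). pose proof (pow2_ge_0 x). pose proof (pow2_ge_0 y). apply Rabs_le. unfold dl; simpl. split; nra.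
Qed.
Lemma UC_Ir : UC Ir.
Proof.
  apply UC_fixed; [|reflexivity]. exists (/ r1). split. left; apply Rinv_0_lt_compat; lra.
  intros p Hp. simpl. pose proof (K_pos p Hp). rewrite Rabs_pos_eq.
  apply Rinv_le_contravar; unfold Kann in Hp; lra. left; apply Rinv_0_lt_compat; lra.
Qed.
Lemma UC_Lg : UC Lg.
Proof.
  apply UC_fixed; [|reflexivity]. exists (Rabs (ln r1) + Rabs (ln r2)). split.
  pose proof (Rabs_pos (ln r1)). pose proof (Rabs_pos (ln r2)). lra.
  intros p Hp. simpl. apply L_bound; auto.
Qed.
Lemma UC_Cst c : UC (Cst c).
Proof. apply (UC_seq _ (fun _ => c) c). apply is_lim_seq_const. reflexivity. reflexivity. Qed.
Lemma UC_Peps : UC Peps.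
Proof. apply (UC_seq _ epsn 0); auto. Qed.
Lemma UC_PE : UC PE.
Proof. apply (UC_seq _ En E0); auto. Qed.
Lemma UC_Pk : UC Pk.
Proof. apply (UC_seq _ kkn kk0); auto. Qed.

Lemma UC_Eu : UC Eu.
Proof.
  set (ML := Rabs (ln r1) + Rabs (ln r2)).
  assert (HML : 0 <= ML) by (pose proof (Rabs_pos (ln r1)); pose proof (Rabs_pos (ln r2)); unfold ML; lra).
  split.
  - exists 1. split. lra. intros p _. unfold dl. simpl. replace (- (B * 0 * ln (nrm2 p))) with 0 by ring.
    rewrite exp_0, Rabs_R1. lra.
  - intros eps He. set (C := 1 + Rabs B * ML).
    assert (HC : 0 < C) by (unfold C; pose proof (Rabs_pos B); nra).
    set (d := Rmin (1 / C) (eps / (4 * C))).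
    assert (Hd : 0 < d) by (unfold d; apply Rmin_glb_lt; apply Rdiv_lt_0_compat; lra).
    destruct (seq_spec epsn 0 Heps d Hd) as [N HN]. exists N. intros n Hn p Hp.
    specialize (HN n Hn). rewrite Rminus_0_r in HN. unfold dn, dl. simpl.
    replace (- (B * 0 * ln (nrm2 p))) with 0 by ring. rewrite exp_0.
    set (w := - (B * epsn n * ln (nrm2 p))).
    assert (Hw : Rabs w <= C * d).
    { unfold w. rewrite Rabs_Ropp, !Rabs_mult.
      pose proof (L_bound p Hp). fold ML in H.
      assert (Rabs B * Rabs (epsn n) * Rabs (ln (nrm2 p)) <= Rabs B * d * ML).
      { apply Rmult_le_compat; try apply Rabs_pos. apply Rmult_le_pos; apply Rabs_pos.
        apply Rmult_le_compat_l. apply Rabs_pos. lra. auto. }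
      unfold C. pose proof (Rabs_pos B). nra. }
    assert (C * d <= 1).
    { unfold d. eapply Rle_trans. apply Rmult_le_compat_l. lra. apply Rmin_l. right; field; lra. }
    assert (C * d <= eps / 4).
    { unfold d. eapply Rle_trans. apply Rmult_le_compat_l. lra. apply Rmin_r. right; field; lra. }
    pose proof (exp_near0 w ltac:(lra)). lra.
Qed.

Definition eQ B := Add (Cst 1) (Add (Mul (Cst (- B)) (Mul Peps Lg)) (Mul (Cst (-1)) (Mul PE Eu))).

Lemma eQ_val B' eps E kk p : den B' eps E kk (eQ B') p = Qv B' eps E p.
Proof. unfold eQ, Qv. simpl. ring. Qed.

Lemma UC_Iq : UC Iq.
Proof.
  assert (HQ : UC (eQ B)).
  { unfold eQ. repeat apply UC_add || apply UC_mul.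
    all: first [apply UC_Cst | apply UC_Peps | apply UC_PE | apply UC_Lg | apply UC_Eu]. }
  destruct HQ as [_ CQ].
  set (q0 := 1 - E0).
  assert (Hq0 : forall p, dl (eQ B) p = q0).
  { intro p. unfold dl. rewrite eQ_val. unfold Qv, q0. replace (- (B * 0 * ln (nrm2 p))) with 0 by ring.
    rewrite exp_0. ring. }
  split.
  - exists (/ q0). split. left; apply Rinv_0_lt_compat; unfold q0; lra.
    intros p _. unfold dl. simpl.
    replace (Qv B 0 E0 p) with q0. rewrite Rabs_pos_eq. lra. left; apply Rinv_0_lt_compat; unfold q0; lra.
    unfold Qv, q0. replace (- (B * 0 * ln (nrm2 p))) with 0 by ring. rewrite exp_0. ring.
  - intros eps He. set (d := Rmin (q0 / 2) (eps * q0 ^ 2 / 4)).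
    assert (Hq : 0 < q0) by (unfold q0; lra).
    assert (Hd : 0 < d) by (unfold d; apply Rmin_glb_lt; [lra|]; apply Rdiv_lt_0_compat; [apply Rmult_lt_0_compat; [lra|apply pow_lt; lra]|lra]).
    destruct (CQ d Hd) as [N HN]. exists N. intros n Hn p Hp. specialize (HN n Hn p Hp).
    rewrite Hq0 in HN. unfold dn in HN. rewrite eQ_val in HN.
    unfold dn, dl. simpl. replace (Qv B 0 E0 p) with q0.
    2: { unfold Qv, q0. replace (- (B * 0 * ln (nrm2 p))) with 0 by ring. rewrite exp_0. ring. }
    set (Q := Qv B (epsn n) (En n) p) in *.
    assert (d <= q0 / 2) by apply Rmin_l. assert (d <= eps * q0 ^ 2 / 4) by apply Rmin_r.
    apply Rabs_def2 in HN.
    assert (HQp : q0 / 2 < Q) by lra.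
    replace (/ Q - / q0) with ((q0 - Q) / (Q * q0)) by (field; lra).
    unfold Rdiv. rewrite Rabs_mult. rewrite (Rabs_pos_eq (/ (Q * q0))) by (left; apply Rinv_0_lt_compat; nra).
    assert (Rabs (q0 - Q) < d) by (apply Rabs_def1; lra).
    assert (/ (Q * q0) <= 2 / q0 ^ 2).
    { replace (2 / q0 ^ 2) with (/ (q0 / 2 * q0)) by (field; lra). apply Rinv_le_contravar. nra.
      apply Rmult_le_compat_r; lra. }
    assert (Rabs (q0 - Q) * / (Q * q0) <= d * (2 / q0 ^ 2)).
    { apply Rmult_le_compat; try lra. apply Rabs_pos. left; apply Rinv_0_lt_compat; nra. }
    assert (d * (2 / q0 ^ 2) <= eps / 2).
    { replace (eps / 2) with (eps * q0 ^ 2 / 4 * (2 / q0 ^ 2)) by (field; lra).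
      apply Rmult_le_compat_r. apply Rlt_le, Rdiv_lt_0_compat; [lra| apply pow_lt; lra]. auto. }
    lra.
Qed.

Lemma UC_all e : UC e.
Proof.
  induction e.
  all: first [apply UC_Cst | apply UC_Peps | apply UC_PE | apply UC_Pk | apply UC_X | apply UC_Y
             | apply UC_Ir | apply UC_Lg | apply UC_Eu | apply UC_Iq | apply UC_add; auto | apply UC_mul; auto].
Qed.

Lemma Q_near : exists N, forall n, (N <= n)%nat -> forall p, Kann p -> (1 - E0) / 2 < Qv B (epsn n) (En n) p.
Proof.
  assert (HQ : UC (eQ B)).
  { unfold eQ. repeat apply UC_add || apply UC_mul.
    all: first [apply UC_Cst | apply UC_Peps | apply UC_PE | apply UC_Lg | apply UC_Eu]. }
  destruct HQ as [_ CQ]. destruct (CQ ((1 - E0) / 2) ltac:(lra)) as [N HN]. exists N.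
  intros n Hn p Hp. specialize (HN n Hn p Hp). unfold dn, dl in HN. rewrite !eQ_val in HN.
  unfold Qv in HN at 2. replace (- (B * 0 * ln (nrm2 p))) with 0 in HN by ring. rewrite exp_0 in HN.
  apply Rabs_def2 in HN. lra.
Qed.
End UC.


Lemma der_G1 (G : R -> R) z1 z2 dG : is_derive G (nrm2 (z1, z2)) dG ->
  Derive (fun u : R => G (nrm2 (u, z2)) * u) z1 = (dG * (2 * z1) * z1 + G (nrm2 (z1, z2))).
Proof.
  intro H. apply is_derive_unique. unfold nrm2 in *; simpl in *. assert (E : ex_derive G (z1 ^ 2 + z2 ^ 2)) by (eexists; eauto).
  auto_derive; auto. rewrite (Dfun G _ _ H). ring.
Qed.
Lemma der_G2 (G : R -> R) z1 z2 dG : is_derive G (nrm2 (z1, z2)) dG ->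
  Derive (fun u : R => G (nrm2 (u, z2)) * z2) z1 = (dG * (2 * z1) * z2).
Proof.
  intro H. apply is_derive_unique. unfold nrm2 in *; simpl in *. assert (E : ex_derive G (z1 ^ 2 + z2 ^ 2)) by (eexists; eauto).
  auto_derive; auto. rewrite (Dfun G _ _ H). ring.
Qed.
Lemma der_G3 (G : R -> R) z1 z2 dG : is_derive G (nrm2 (z1, z2)) dG ->
  Derive (fun u : R => G (nrm2 (z1, u)) * z1) z2 = (dG * (2 * z2) * z1).
Proof.
  intro H. apply is_derive_unique. unfold nrm2 in *; simpl in *. assert (E : ex_derive G (z1 ^ 2 + z2 ^ 2)) by (eexists; eauto).
  auto_derive; auto. rewrite (Dfun G _ _ H). ring.
Qed.
Lemma der_G4 (G : R -> R) z1 z2 dG : is_derive G (nrm2 (z1, z2)) dG ->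
  Derive (fun u : R => G (nrm2 (z1, u)) * u) z2 = (dG * (2 * z2) * z2 + G (nrm2 (z1, z2))).
Proof.
  intro H. apply is_derive_unique. unfold nrm2 in *; simpl in *. assert (E : ex_derive G (z1 ^ 2 + z2 ^ 2)) by (eexists; eauto).
  auto_derive; auto. rewrite (Dfun G _ _ H). ring.
Qed.

Lemma jac_G (Phi : pt -> pt) (G : R -> R) z1 z2 dG :
  (forall p, Phi p = (G (nrm2 p) * fst p, G (nrm2 p) * snd p)) ->
  is_derive G (nrm2 (z1, z2)) dG ->
  forall v : pt, jac Phi (z1, z2) v =
    (G (nrm2 (z1, z2)) * fst v + 2 * dG * (z1 * fst v + z2 * snd v) * z1,
     G (nrm2 (z1, z2)) * snd v + 2 * dG * (z1 * fst v + z2 * snd v) * z2).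
Proof.
  intros HP HG v. unfold jac, pd. simpl.
  rewrite (Derive_ext (fun t => fst (Phi (t, z2))) (fun u => G (nrm2 (u, z2)) * u)) by (intro; rewrite HP; reflexivity).
  rewrite (Derive_ext (fun t => fst (Phi (z1, t))) (fun u => G (nrm2 (z1, u)) * z1)) by (intro; rewrite HP; reflexivity).
  rewrite (Derive_ext (fun t => snd (Phi (t, z2))) (fun u => G (nrm2 (u, z2)) * z2)) by (intro; rewrite HP; reflexivity).
  rewrite (Derive_ext (fun t => snd (Phi (z1, t))) (fun u => G (nrm2 (z1, u)) * u)) by (intro; rewrite HP; reflexivity).
  rewrite (der_G1 G z1 z2 dG HG).
  rewrite (der_G2 G z1 z2 dG HG).
  rewrite (der_G3 G z1 z2 dG HG).
  rewrite (der_G4 G z1 z2 dG HG).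
  f_equal; ring.
Qed.

Definition Gf a B b1 (g : R -> R) q := exp (a ^ 2 * (b1 - g (ln q)) / (2 * B)) / sqrt q.

Lemma Gf_der a B b1 g g' q : 0 < q -> B <> 0 -> is_derive g (ln q) g' ->
  is_derive (Gf a B b1 g) q (Gf a B b1 g q * (- (a ^ 2 / (2 * B)) * g' / q - 1 / (2 * q))).
Proof.
  intros Hq HB H. assert (E : ex_derive g (ln q)) by (eexists; eauto).
  pose proof (sqrt_lt_R0 q Hq).
  unfold Gf. auto_derive. { repeat split; auto. apply Rgt_not_eq; lra. }
  rewrite (Dfun g _ _ H).
  assert (sqrt q * sqrt q = q) by (apply sqrt_sqrt; lra).
  replace (a * (a * 1) * (b1 + - g (ln q)) * / (2 * B)) with (a ^ 2 * (b1 - g (ln q)) / (2 * B)) by (field; auto).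
  set (ee := exp (a ^ 2 * (b1 - g (ln q)) / (2 * B))).
  remember (sqrt q) as s. clear Heqs. rewrite <- H1. field. repeat split; auto; apply Rgt_not_eq; lra.
Qed.

Lemma Psi_G a B b1 f p : Psi a B b1 f p = (Gf a B b1 (Derive_n f 1) (nrm2 p) * fst p, Gf a B b1 (Derive_n f 1) (nrm2 p) * snd p).
Proof. unfold Psi, tau, Gf. simpl. f_equal; unfold Rdiv; ring. Qed.

Definition yy (i j : bool) : ex := match i, j with true, true => Mul X X | false, false => Mul Y Y | _, _ => Mul X Y end.
Definition zz (i j : bool) : ex := match i, j with true, true => Mul Y Y | false, false => Mul X X | _, _ => Mul (Cst (-1)) (Mul X Y) end.
Definition eT B (i j : bool) : ex :=
  Mul Pk (Mul (Mul Ir Ir) (Add (Mul (Cst (2 * B ^ 2)) (Mul Iq (yy i j))) (Mul (Cst 2) (Mul (eQ B) (zz i j))))).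

Lemma eT_val B eps E kk i j p : den B eps E kk (eT B i j) p =
  kk * (/ nrm2 p * / nrm2 p) * (2 * B ^ 2 * / Qv B eps E p * den B eps E kk (yy i j) p + 2 * Qv B eps E p * den B eps E kk (zz i j) p).
Proof. unfold eT. cbn [den]. rewrite eQ_val. ring. Qed.

(* inverse of the Jacobian J v = G v + 2 dG (z.v) z *)
Definition vinv G dG (z e : pt) : pt :=
  let q := nrm2 z in let c := 2 * dG / (G + 2 * dG * q) in
  let ze := fst z * fst e + snd z * snd e in
  (/ G * (fst e - c * ze * fst z), / G * (snd e - c * ze * snd z)).

Lemma vinv_ok G dG (z e : pt) : G <> 0 -> G + 2 * dG * nrm2 z <> 0 ->
  let v := vinv G dG z e in
  (G * fst v + 2 * dG * (fst z * fst v + snd z * snd v) * fst z,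
   G * snd v + 2 * dG * (fst z * fst v + snd z * snd v) * snd z) = e.
Proof.
  intros HG HD. destruct z as [z1 z2], e as [e1 e2]. unfold vinv, nrm2 in *. simpl in *.
  replace (z1 * (z1 * 1) + z2 * (z2 * 1)) with (z1 * z1 + z2 * z2) in HD by ring. f_equal; field; auto.
Qed.

Lemma final_alg a b1 B phi lam y1 y2 (i j : bool) :
  a <> 0 -> b1 <> 0 -> B <> 0 -> phi <> 0 -> lam <> 0 -> nrm2 (y1, y2) <> 0 ->
  let z := (lam * y1, lam * y2) in
  let G := / lam in
  let dG := G * (- (a ^ 2 / (2 * B)) * phi / nrm2 z - 1 / (2 * nrm2 z)) in
  / (b1 ^ 2) * (2 * phi / nrm2 z * dot (vinv G dG z (ebas i)) (vinv G dG z (ebas j))) =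
  / (a * b1) ^ 2 * (/ nrm2 (y1, y2) * / nrm2 (y1, y2)) *
   (2 * B ^ 2 * / (a ^ 2 * phi) * den B 0 0 0 (yy i j) (y1, y2) + 2 * (a ^ 2 * phi) * den B 0 0 0 (zz i j) (y1, y2)).
Proof.
  intros Ha Hb HB Hp Hl Hy z G dG.
  assert (Hq : nrm2 z = lam ^ 2 * nrm2 (y1, y2)) by (unfold z, nrm2; simpl; ring).
  assert (HD : G + 2 * dG * nrm2 z = - (a ^ 2 / B) * phi * G).
  { unfold dG. rewrite Hq. field. auto. }
  assert (HD' : G + 2 * dG * nrm2 z <> 0).
  { rewrite HD. unfold G. intro h.
    assert (E1 : - (a ^ 2 / B) * phi * / lam * (- B * lam / (a ^ 2 * phi)) = 1).
    { field. repeat split; auto. }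
    rewrite h in E1. lra. }
  unfold vinv. set (c := 2 * dG / (G + 2 * dG * nrm2 z)).
  assert (Hc : c = (2 * (a ^ 2 / (2 * B)) * phi + 1) / (2 * (a ^ 2 / (2 * B)) * phi * nrm2 z)).
  { unfold c. rewrite HD. unfold dG, G. rewrite Hq. field. repeat split; auto. }
  rewrite Hc. unfold G. rewrite Hq. unfold z, nrm2 in *. simpl in *.
  assert (Hy2 : y1 * y1 + y2 * y2 <> 0) by (intro h; apply Hy; rewrite <- h; ring).
  unfold dot. destruct i, j; simpl; field; repeat split; auto.
Qed.

Lemma Pa_Qv a b1 B p : a <> 0 ->
  a ^ 2 * Pa a b1 (b1 - B * ln (nrm2 p) / a ^ 2) = Qv B (/ a) ((1 - a * b1) * exp (a * b1)) p.
Proof.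
  intro Ha. unfold Pa, Qv.
  replace (a * (b1 - B * ln (nrm2 p) / a ^ 2)) with (a * b1 + - (B * / a * ln (nrm2 p))) by (field; auto).
  rewrite exp_plus. field. auto.
Qed.

Lemma sqrt_exp x : sqrt (exp x) = exp (x / 2).
Proof.
  replace (exp x) with (exp (x / 2) * exp (x / 2)) by (rewrite <- exp_plus; f_equal; field).
  apply sqrt_square. left; apply exp_pos.
Qed.

Lemma yy_indep B e1 e2 e3 e1' e2' e3' i j p : den B e1 e2 e3 (yy i j) p = den B e1' e2' e3' (yy i j) p.
Proof. destruct i, j; reflexivity. Qed.
Lemma zz_indep B e1 e2 e3 e1' e2' e3' i j p : den B e1 e2 e3 (zz i j) p = den B e1' e2' e3' (zz i j) p.
Proof. destruct i, j; reflexivity. Qed.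

Section TF.
Variables (b1 b2 a B : R) (f : R -> R) (T : tensor2).
Hypothesis Hb : 0 < b1 < b2.
Hypothesis HB : 0 < B.
Hypothesis Hf : is_football_potential b1 b2 f.
Hypothesis Ha : is_a b1 b2 a.
Hypothesis HT : is_pushforward (Psi a B b1 f) (fun z v w => / (b1 ^ 2) * g_foot f z v w) T.

Lemma T_formula y i j : 0 < nrm2 y -> 0 < b1 - B * ln (nrm2 y) / a ^ 2 < b1 + b2 ->
  Defs.comp T i j y = den B (/ a) ((1 - a * b1) * exp (a * b1)) (/ (a * b1) ^ 2) (eT B i j) y.
Proof.
  intros Hy Ht. destruct y as [y1 y2].
  assert (Ha0 : 0 < a) by (destruct Ha as [[h _] _]; exact h).
  set (tau0 := b1 - B * ln (nrm2 (y1, y2)) / a ^ 2) in *.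
  destruct (f1_surj b1 b2 f Hf tau0 Ht) as [s Hs].
  set (qy := nrm2 (y1, y2)) in *.
  pose proof (sqrt_lt_R0 qy Hy) as Hsq.
  set (lam := exp (s / 2) / sqrt qy).
  assert (Hlam : 0 < lam) by (unfold lam; apply Rdiv_lt_0_compat; auto; apply exp_pos).
  set (z := (lam * y1, lam * y2)).
  assert (Hq : nrm2 z = exp s).
  { unfold z, nrm2. simpl. replace (lam * y1 * (lam * y1 * 1) + lam * y2 * (lam * y2 * 1)) with (lam * lam * qy) by (unfold qy, nrm2; simpl; ring).
    unfold lam. replace (exp s) with (exp (s/2) * exp (s/2)) by (rewrite <- exp_plus; f_equal; field).
    assert (sqrt qy * sqrt qy = qy) by (apply sqrt_sqrt; lra).
    remember (sqrt qy) as r. clear Heqr. rewrite <- H. field. lra. }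
  assert (Hz : z <> (0, 0)).
  { intro h. rewrite h in Hq. unfold nrm2 in Hq. simpl in Hq. pose proof (exp_pos s). lra. }
  set (G := Gf a B b1 (Derive_n f 1)).
  assert (HGz : G (nrm2 z) = / lam).
  { unfold G, Gf. rewrite Hq, ln_exp, Hs. unfold tau0.
    replace (a ^ 2 * (b1 - (b1 - B * ln qy / a ^ 2)) / (2 * B)) with (ln qy / 2) by (field; lra).
    rewrite <- sqrt_exp, exp_ln by auto. rewrite sqrt_exp. unfold lam. pose proof (exp_pos (s / 2)). field. split; lra. }
  set (phi := Derive_n f 2 s).
  assert (Hphi : 0 < phi) by (apply (f2pos b1 b2 f Hf)).
  set (dG := / lam * (- (a ^ 2 / (2 * B)) * phi / nrm2 z - 1 / (2 * nrm2 z))).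
  assert (HG : is_derive G (nrm2 z) dG).
  { unfold dG. rewrite <- HGz. apply Gf_der. rewrite Hq; apply exp_pos. lra.
    rewrite Hq, ln_exp. apply (fd2 b1 b2 f Hf). }
  assert (HJ : forall v, jac (Psi a B b1 f) z v =
     (G (nrm2 z) * fst v + 2 * dG * (fst z * fst v + snd z * snd v) * fst z,
      G (nrm2 z) * snd v + 2 * dG * (fst z * fst v + snd z * snd v) * snd z)).
  { intro v. unfold z. apply (jac_G (Psi a B b1 f) G). intro p. apply Psi_G. exact HG. }
  assert (HPz : Psi a B b1 f z = (y1, y2)).
  { rewrite Psi_G. fold G. rewrite HGz. unfold z. simpl. f_equal; field; lra. }
  assert (HD : G (nrm2 z) + 2 * dG * nrm2 z <> 0).
  { rewrite HGz. unfold dG. intro h.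
    assert (E1 : (/ lam + 2 * (/ lam * (- (a ^ 2 / (2 * B)) * phi / nrm2 z - 1 / (2 * nrm2 z))) * nrm2 z)
                  * (- B * lam / (a ^ 2 * phi)) = 1).
    { field. rewrite Hq. repeat split; try lra. apply Rgt_not_eq, exp_pos. }
    rewrite h in E1. lra. }
  assert (HGn : G (nrm2 z) <> 0) by (rewrite HGz; apply Rinv_neq_0_compat; lra).
  assert (Hinv : forall e, jac (Psi a B b1 f) z (vinv (G (nrm2 z)) dG z e) = e).
  { intro e. rewrite HJ. apply vinv_ok; auto. }
  unfold Defs.comp.
  replace (T (y1, y2) (ebas i) (ebas j)) with
    (T (Psi a B b1 f z) (jac (Psi a B b1 f) z (vinv (G (nrm2 z)) dG z (ebas i)))
       (jac (Psi a B b1 f) z (vinv (G (nrm2 z)) dG z (ebas j)))) by (rewrite HPz, !Hinv; reflexivity).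
  rewrite (HT z Hz). unfold g_foot.
  replace (Derive_n f 2 (ln (nrm2 z))) with phi by (rewrite Hq, ln_exp; reflexivity).
  rewrite HGz.
  rewrite eT_val.
  rewrite (yy_indep B _ _ _ 0 0 0), (zz_indep B _ _ _ 0 0 0).
  assert (HQ : Qv B (/ a) ((1 - a * b1) * exp (a * b1)) (y1, y2) = a ^ 2 * phi).
  { rewrite <- Pa_Qv by lra. fold qy. fold tau0. unfold phi. rewrite (ode_explicit b1 b2 f Hb Hf a Ha s). rewrite Hs. reflexivity. }
  rewrite HQ.
  replace (2 * phi / nrm2 z * dot (vinv (/ lam) dG z (ebas i)) (vinv (/ lam) dG z (ebas j)))
     with (2 * phi / nrm2 z * dot (vinv (/ lam) dG z (ebas i)) (vinv (/ lam) dG z (ebas j))) by reflexivity.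
  apply final_alg; try lra. unfold qy in Hy; lra.
Qed.
End TF.


Lemma exp_gt_1x x : 0 < x -> 1 + x < exp x.
Proof.
  intro h. assert (exp 0 - 0 < exp x - x); [|rewrite exp_0 in H; lra].
  apply (incr_strict (fun t => exp t - t) (fun t => exp t - 1)); auto.
  - intros t _. auto_derive; auto. ring.
  - intros t Ht. pose proof (exp_increasing 0 t ltac:(lra)). rewrite exp_0 in H. lra.
Qed.

Lemma Bc_pos b : 0 < b -> 0 < Bc b.
Proof.
  intro h. unfold Bc. pose proof (exp_gt_1x b h).
  rewrite exp_Ropp. pose proof (exp_pos b).
  assert ((1 + b) * / exp b < 1); [|lra].
  apply (Rmult_lt_reg_r (exp b)); auto. field_simplify; lra.
Qed.

Lemma E0_val c b : is_b c b -> 1 - (1 - b * c) * exp (b * c) = Bc b.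
Proof.
  intros [_ H]. unfold Bc.
  assert (E : (1 - b * c) = (b + 1) * exp (- (b * (1 + c)))) by lra.
  rewrite E. rewrite Rmult_assoc, <- exp_plus.
  replace (- (b * (1 + c)) + b * c) with (- b) by ring. ring.
Qed.

Lemma sqrt_bounds r1 r2 x : 0 < r1 -> r1 <= sqrt (nrm2 x) <= r2 -> r1 ^ 2 <= nrm2 x <= r2 ^ 2.
Proof.
  intros h [h1 h2]. assert (0 <= nrm2 x) by (unfold nrm2; nra).
  rewrite <- (sqrt_sqrt (nrm2 x)) by auto. split; simpl; nra.
Qed.

Lemma cyl_den B E0 kk0 q i j : 0 < nrm2 q -> 1 - E0 = B -> 0 < B ->
  Defs.comp (fun z v w => 2 * B * kk0 * g_cyl z v w) i j q = den B 0 E0 kk0 (eT B i j) q.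
Proof.
  intros Hq HE HB. rewrite eT_val.
  assert (Qv B 0 E0 q = B).
  { unfold Qv. replace (- (B * 0 * ln (nrm2 q))) with 0 by ring. rewrite exp_0. lra. }
  rewrite H. destruct q as [q1 q2]. unfold Defs.comp, g_cyl, dot, nrm2 in *. simpl in *.
  destruct i, j; simpl; field; lra.
Qed.

Lemma ev_gt (u : nat -> R) (l m : R) : is_lim_seq u l -> m < l -> exists N, forall n, (N <= n)%nat -> m < u n.
Proof.
  intros H h. destruct (seq_spec u l H (l - m) ltac:(lra)) as [N HN]. exists N. intros n Hn.
  specialize (HN n Hn). apply Rabs_def2 in HN. lra.
Qed.

Theorem theorem1p3 :
  forall c : R, 0 < c < 1 ->
  forall b : R, is_b c b ->
  exists C : R, 0 < C /\
  forall (b1 b2 a : nat -> R) (f : nat -> R -> R) (T : nat -> tensor2),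
    (forall n, 0 < b1 n < b2 n) ->
    is_lim_seq (fun n => b1 n / b2 n) (Finite c) ->
    is_lim_seq b2 (Finite 0) ->
    (forall n, is_a (b1 n) (b2 n) (a n)) ->
    (forall n, is_football_potential (b1 n) (b2 n) (f n)) ->
    (forall n, is_pushforward (Psi (a n) (Bc b) (b1 n) (f n))
                 (fun z v w => / (b1 n ^ 2) * g_foot (f n) z v w) (T n)) ->
    Cinf_loc_conv T (fun z v w => C * g_cyl z v w) /\
    (forall n, exists p : pt,
        (p <> (0, 0) /\ snd p = 0 /\ 0 < fst p /\ tau (f n) p = b1 n) /\
        (forall q : pt, (q <> (0, 0) /\ snd q = 0 /\ 0 < fst q /\ tau (f n) q = b1 n) -> q = p) /\
        Psi (a n) (Bc b) (b1 n) (f n) p = (1, 0)).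
Proof.
  intros c Hc b Hbb.
  assert (Hb0 : 0 < b) by (destruct Hbb as [[h _] _]; exact h).
  assert (HB : 0 < Bc b) by (apply Bc_pos; auto).
  assert (Hbc : 0 < b * c) by nra.
  exists (2 * Bc b * / (b * c) ^ 2). split.
  { apply Rmult_lt_0_compat. lra. apply Rinv_0_lt_compat. apply pow_lt. lra. }
  intros b1 b2 a f T Hb12 Hcn Hb2 Ha Hf HT.
  assert (Ha0 : forall n, 0 < a n) by (intro n; destruct (Ha n) as [[h _] _]; exact h).
  split.
  -
    assert (Hx : is_lim_seq (fun n => a n * b2 n) b).
    { apply (root_conv c b (fun n => b1 n / b2 n)); auto.
      - intro n. apply ratio_in; auto.
      - destruct Hbb as [_ h]. exact h.
      - intro n. split. rewrite <- Fr_is_a by auto. destruct (Ha n) as [_ h]. exact h.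
        apply Rmult_lt_0_compat; auto. destruct (Hb12 n); lra. }
    assert (Hk : is_lim_seq (fun n => a n * b1 n) (b * c)).
    { apply (is_lim_seq_ext (fun n => (a n * b2 n) * (b1 n / b2 n))).
      { intro n. destruct (Hb12 n). field. lra. }
      apply is_lim_seq_mult'; auto. }
    assert (Heps : is_lim_seq (fun n => / a n) 0).
    { apply (is_lim_seq_ext (fun n => b2 n / (a n * b2 n))).
      { intro n. destruct (Hb12 n). pose proof (Ha0 n). field. lra. }
      replace 0 with (0 / b) by (field; lra). apply is_lim_seq_div'; auto. lra. }
    set (E0 := (1 - b * c) * exp (b * c)).
    assert (HE : is_lim_seq (fun n => (1 - a n * b1 n) * exp (a n * b1 n)) E0).
    { apply (is_lim_seq_continuous (fun k => (1 - k) * exp k) (fun n => a n * b1 n) (b * c)); auto.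
      apply der_cont with (l := - exp (b * c) + (1 - b * c) * exp (b * c)). auto_derive; auto. ring. }
    assert (Hkk : is_lim_seq (fun n => / (a n * b1 n) ^ 2) (/ (b * c) ^ 2)).
    { apply (is_lim_seq_continuous (fun k => / k ^ 2) (fun n => a n * b1 n) (b * c)); auto.
      apply der_cont with (l := - (2 * (b * c)) / ((b * c) ^ 2) ^ 2). auto_derive. nra. field. nra. }
    assert (HE0 : 1 - E0 = Bc b) by (unfold E0; apply E0_val; auto).
    intros r1 r2 Hr1 Hr12 l i j eps Heps'.
    set (rho1 := r1 ^ 2 / 2). set (rho2 := 2 * r2 ^ 2).
    assert (Hrho1 : 0 < rho1) by (unfold rho1; nra).
    assert (Hrho12 : rho1 <= rho2) by (unfold rho1, rho2; nra).
    set (U := fun q => rho1 < nrm2 q < rho2).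
    assert (HUo : line_open U) by apply annulus_open.
    destruct (Q_near (Bc b) rho1 rho2 E0 (/ (b * c) ^ 2) (fun n => / a n) (fun n => (1 - a n * b1 n) * exp (a n * b1 n))
                (fun n => / (a n * b1 n) ^ 2) Hrho1 Heps HE ltac:(lra)) as [N1 HN1].
    assert (HUC := UC_all (Bc b) (r1 ^ 2) (r2 ^ 2) E0 (/ (b * c) ^ 2) (fun n => / a n)
                (fun n => (1 - a n * b1 n) * exp (a n * b1 n)) (fun n => / (a n * b1 n) ^ 2)
                ltac:(nra) ltac:(nra) Heps HE Hkk ltac:(lra) (Ds (Bc b) l (eT (Bc b) i j))).
    destruct HUC as [_ HUC]. destruct (HUC eps Heps') as [N2 HN2].
    set (ML := Rabs (ln rho1) + Rabs (ln rho2)).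
    assert (HML : 0 <= ML) by (unfold ML; pose proof (Rabs_pos (ln rho1)); pose proof (Rabs_pos (ln rho2)); lra).
    set (m := Rmin (b * c) b).
    assert (Hm : 0 < m) by (unfold m; apply Rmin_glb_lt; lra).
    destruct (ev_gt _ _ (m / 2) Hk) as [N3 HN3].
    { assert (m <= b * c) by apply Rmin_l. lra. }
    destruct (ev_gt _ _ (m / 2) Hx) as [N4 HN4].
    { assert (m <= b) by apply Rmin_r. lra. }
    destruct (seq_spec _ _ Heps (m / (2 * (1 + Bc b * ML))) ltac:(apply Rdiv_lt_0_compat; nra)) as [N5 HN5].
    exists (max N1 (max N2 (max N3 (max N4 N5)))). intros n Hn x Hxr.
    pose proof (sqrt_bounds r1 r2 x Hr1 Hxr) as Kx.
    assert (UK : forall q, U q -> Kann rho1 rho2 q) by (intros q Hq; unfold U, Kann in *; lra).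
    assert (Ux : U x) by (unfold U, rho1, rho2; nra).
    assert (Hrange : forall q, U q -> 0 < b1 n - Bc b * ln (nrm2 q) / a n ^ 2 < b1 n + b2 n).
    { intros q Hq. pose proof (L_bound rho1 rho2 Hrho1 q (UK q Hq)) as HL. fold ML in HL.
      specialize (HN3 n ltac:(lia)). specialize (HN4 n ltac:(lia)). specialize (HN5 n ltac:(lia)).
      rewrite Rminus_0_r in HN5. pose proof (Ha0 n) as Han.
      rewrite Rabs_pos_eq in HN5 by (left; apply Rinv_0_lt_compat; auto).
      assert (Hbd : Rabs (Bc b * ln (nrm2 q) * / a n) < m / 2).
      { rewrite !Rabs_mult, (Rabs_pos_eq (Bc b)) by lra. rewrite (Rabs_pos_eq (/ a n)) by (left; apply Rinv_0_lt_compat; auto).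
        assert (Bc b * Rabs (ln (nrm2 q)) * / a n <= Bc b * ML * (m / (2 * (1 + Bc b * ML)))).
        { pose proof (Rabs_pos (ln (nrm2 q))). apply Rmult_le_compat. nra. left; apply Rinv_0_lt_compat; auto. apply Rmult_le_compat_l; lra. lra. }
        assert (Bc b * ML * (m / (2 * (1 + Bc b * ML))) < m / 2).
        { apply (Rmult_lt_reg_r (2 * (1 + Bc b * ML))). nra. field_simplify; nra. }
        lra. }
      apply Rabs_def2 in Hbd.
      assert (E1 : Bc b * ln (nrm2 q) / a n ^ 2 = (Bc b * ln (nrm2 q) * / a n) / a n) by (field; lra).
      rewrite E1. destruct (Hb12 n).
      split.
      - assert ((Bc b * ln (nrm2 q) * / a n) / a n < b1 n); [|lra].
        apply (Rmult_lt_reg_r (a n)); auto. field_simplify; [|lra]. rewrite Rmult_comm. lra.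
      - assert (- ((Bc b * ln (nrm2 q) * / a n) / a n) < b2 n); [|lra].
        apply (Rmult_lt_reg_r (a n)); auto. field_simplify; [|lra]. rewrite Rmult_comm. lra. }
    assert (E1 : pds l (Defs.comp (T n) i j) x = pds l (den (Bc b) (/ a n) ((1 - a n * b1 n) * exp (a n * b1 n)) (/ (a n * b1 n) ^ 2) (eT (Bc b) i j)) x).
    { apply (pds_ext U); auto. intros q Hq. apply (T_formula (b1 n) (b2 n) (a n) (Bc b) (f n) (T n)); auto.
      unfold U in Hq; lra. }
    assert (E2 : pds l (den (Bc b) (/ a n) ((1 - a n * b1 n) * exp (a n * b1 n)) (/ (a n * b1 n) ^ 2) (eT (Bc b) i j)) x
               = den (Bc b) (/ a n) ((1 - a n * b1 n) * exp (a n * b1 n)) (/ (a n * b1 n) ^ 2) (Ds (Bc b) l (eT (Bc b) i j)) x).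
    { apply (pds_den _ _ _ _ _ U HUo); auto. intros q Hq. split; [unfold U in Hq; lra|].
      specialize (HN1 n ltac:(lia) q (UK q Hq)). simpl in HN1. lra. }
    assert (E3 : pds l (Defs.comp (fun z v w => 2 * Bc b * / (b * c) ^ 2 * g_cyl z v w) i j) x = pds l (den (Bc b) 0 E0 (/ (b * c) ^ 2) (eT (Bc b) i j)) x).
    { apply (pds_ext U); auto. intros q Hq. apply cyl_den; auto. unfold U in Hq; lra. }
    assert (E4 : pds l (den (Bc b) 0 E0 (/ (b * c) ^ 2) (eT (Bc b) i j)) x = den (Bc b) 0 E0 (/ (b * c) ^ 2) (Ds (Bc b) l (eT (Bc b) i j)) x).
    { apply (pds_den _ _ _ _ _ U HUo); auto. intros q Hq. split; [unfold U in Hq; lra|].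
      unfold Qv. replace (- (Bc b * 0 * ln (nrm2 q))) with 0 by ring. rewrite exp_0. lra. }
    rewrite E1, E2, E3, E4.
    apply (HN2 n ltac:(lia) x Kx).
  -
    intro n. destruct (Hb12 n) as [h1 h2].
    destruct (f1_surj (b1 n) (b2 n) (f n) (Hf n) (b1 n) ltac:(lra)) as [s Hs].
    exists (exp (s / 2), 0).
    assert (Hn : nrm2 (exp (s / 2), 0) = exp s).
    { unfold nrm2. simpl. replace (exp (s / 2) * (exp (s / 2) * 1) + 0 * (0 * 1)) with (exp (s / 2) * exp (s / 2)) by ring.
      rewrite <- exp_plus. f_equal. field. }
    assert (Htau : tau (f n) (exp (s / 2), 0) = b1 n) by (unfold tau; rewrite Hn, ln_exp; exact Hs).
    pose proof (exp_pos (s / 2)) as Hes.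
    split; [|split].
    + split. intro h; injection h; lra. split. reflexivity. split. simpl; lra. exact Htau.
    + intros [q1 q2] [Hq0 [Hq2 [Hq1 Hqt]]]. simpl in Hq2, Hq1. subst q2.
      unfold tau in Hqt. rewrite <- Hs in Hqt. apply (f1_inj (b1 n) (b2 n) (f n) (Hf n)) in Hqt.
      assert (Hq : nrm2 (q1, 0) = exp s).
      { rewrite <- Hqt. rewrite exp_ln. reflexivity. unfold nrm2; simpl; nra. }
      f_equal. unfold nrm2 in Hq. simpl in Hq.
      rewrite <- sqrt_exp, <- Hq. replace (q1 * (q1 * 1) + 0 * (0 * 1)) with (q1 * q1) by ring.
      rewrite sqrt_square; lra.
    + unfold Psi. rewrite Htau. simpl.
      replace (a n * (a n * 1) * (b1 n - b1 n) / (2 * Bc b)) with 0 by (field; lra). rewrite exp_0.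
      fold (nrm2 (exp (s / 2), 0)). rewrite Hn, sqrt_exp. f_equal; field; lra.
Qed.
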